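(* For every prime $p$ and every integer $\tau$ there exists $\alpha^\tau_p\in\mathbb Z[z^2]$, $z=q-q^{-1}$, such that $$\sum_{j=0}^{p-1}(q^{p\tau})^{p-1-2j}-p\,(-1)^{(p-1)\tau}=[p]^2\,\alpha^\tau_p,\qquad [p]=\frac{q^p-q^{-p}}{q-q^{-1}}.$$ *)

(* Defs.v *)
From HB Require Import structures.
From mathcomp Require Import all_boot all_order all_algebra.
From mathcomp Require Import fraction.
Set Implicit Arguments. Unset Strict Implicit. Unset Printing Implicit Defensive.
Import Order.TTheory GRing.Theory Num.Theory.
Local Open Scope ring_scope.

(* Laurent polynomials Z[q,q^-1] are realized inside the field of rational
   functions Q(q) = {fraction {poly int}}, with q the image of 'X. *)
Definition LQ := {fraction {poly int}}.
Definition qv : LQ := tofrac ('X : {poly int}).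
Definition zv : LQ := qv - qv^-1.
Definition qint (n : nat) : LQ := (qv ^+ n - qv ^- n) / (qv - qv^-1).
Definition inZz2 (P : {poly int}) : LQ := (map_poly (fun c : int => c%:~R) P).[zv ^+ 2].

(* Main.v *)
Require Import Defs.
From mathcomp Require Import all_boot all_order all_algebra.
From mathcomp Require Import fraction ring zify.
Import Order.TTheory GRing.Theory Num.Theory.
Local Open Scope ring_scope.

Lemma idF (F : fieldType) (w W s t : F) : w != 0 -> W != 0 -> s * s = 1 ->
  w * (w * W) + (w * (w * W))^-1 - 2 * (s * (s * t)) =
  (w + w^-1 - 2 * s + 2 * s) * (w * W + (w * W)^-1 - 2 * (s * t)) -
  (W + W^-1 - 2 * t) + (w + w^-1 - 2 * s) * (2 * (s * t)).
Proof.
move=> w0 W0 ss; apply/eqP; rewrite -subr_eq0.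
set L := (X in X == 0).
have -> : L = 2 * t * (s * s - 1).
  rewrite /L; field. 
  by rewrite w0 W0.
by rewrite ss subrr mulr0 eqxx.
Qed.

Lemma ringid (R : comRingType) (c s h1 h0 k : R) :
  c * ((c + 2 * s) * h1 - h0 + k) = (c + 2 * s) * (c * h1) - c * h0 + c * k.
Proof. ring. Qed.

Definition Z2 (v : LQ) := exists P : {poly int}, v = inZz2 P.

Lemma Z2M u v : Z2 u -> Z2 v -> Z2 (u * v).
Proof. by move=> [P ->] [Q ->]; exists (P * Q); rewrite /inZz2 rmorphM /= hornerM. Qed.
Lemma Z2B u v : Z2 u -> Z2 v -> Z2 (u - v).
Proof. by move=> [P ->] [Q ->]; exists (P - Q); rewrite /inZz2 rmorphB /= hornerD hornerN. Qed.
Lemma Z2D u v : Z2 u -> Z2 v -> Z2 (u + v).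
Proof. by move=> [P ->] [Q ->]; exists (P + Q); rewrite /inZz2 rmorphD /= hornerD. Qed.
Lemma Z2int (k : int) : Z2 (k%:~R).
Proof. by exists k%:P; rewrite /inZz2 map_polyC hornerC. Qed.
Lemma Z2z : Z2 (zv ^+ 2).
Proof. by exists 'X; rewrite /inZz2 map_polyX hornerX. Qed.
Lemma Z2X u m : Z2 u -> Z2 (u ^+ m).
Proof. move=> Hu; elim: m => [|m IH]; first by have := Z2int 1; rewrite expr0.
by rewrite exprS; apply: Z2M. Qed.
Lemma Z2N1 : Z2 (-1).
Proof. have := Z2int (-1); by rewrite mulrN1z. Qed.
Lemma Z2n (n : nat) : Z2 (n%:R).
Proof. by have := Z2int n; rewrite -pmulrn. Qed.

Lemma Flem (w : LQ) (b : bool) : w != 0 -> Z2 (w + w^-1) ->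
  forall n, exists h, Z2 h /\
   w ^+ n + (w ^+ n)^-1 - 2 * ((-1) ^+ b) ^+ n = (w + w^-1 - 2 * (-1) ^+ b) * h.
Proof.
move=> w0 Zw.
set s := (-1 : LQ) ^+ b.
have Zs : Z2 s by apply: Z2X; apply: Z2N1.
set c := w + w^-1 - 2 * s.
have Zc : Z2 c by apply: Z2B => //; apply: Z2M => //; apply: Z2n.
suff: forall n, (exists h, Z2 h /\ w ^+ n + (w ^+ n)^-1 - 2 * s ^+ n = c * h) /\
                (exists h, Z2 h /\ w ^+ n.+1 + (w ^+ n.+1)^-1 - 2 * s ^+ n.+1 = c * h).
  by move=> H n; case: (H n).
elim=> [|n [[h0 [Z0 E0]] [h1 [Z1 E1]]]].
  split; first by exists 0; split; [by have := Z2n 0|]; rewrite expr0 invr1 expr0 mulr0 mulr1; apply/eqP; rewrite subr_eq0.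
  by exists 1; split; [by have := Z2n 1| ]; rewrite !expr1 mulr1.
split; first by exists h1.
exists ((c + 2 * s) * h1 - h0 + 2 * s ^+ n.+1); split.
  apply: Z2D; first apply: Z2B => //; first apply: Z2M => //.
    by apply: Z2D => //; apply: Z2M => //; apply: Z2n.
  by apply: Z2M; [apply: Z2n | apply: Z2X].
have -> : c * ((c + 2 * s) * h1 - h0 + 2 * s ^+ n.+1)
   = (c + 2 * s) * (c * h1) - c * h0 + c * (2 * s ^+ n.+1) by apply: ringid.
rewrite -E1 -E0 /c.
have ss : s * s = 1 by rewrite /s; case: (b); rewrite /= ?expr1 ?expr0 ?mulr1 // mulrN1 opprK.
have Wn : w ^+ n != 0 by apply: expf_neq0.
move: Wn; rewrite !exprS; set W := w ^+ n; move=> Wn.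
exact: (@idF _ w W s (s ^+ n) w0 Wn ss).
Qed.
Lemma Srec (x : LQ) (m : nat) : x != 0 ->
  \sum_(j < m.+2) x ^ ((m.+2)%:Z - 1 - 2 * j%:Z)
  = x ^+ m.+1 + (x ^+ m.+1)^-1 + \sum_(j < m) x ^ (m%:Z - 1 - 2 * j%:Z).
Proof.
move=> x0.
rewrite big_ord_recl big_ord_recr /=.
have -> : (m.+2%:Z - 1 - 2 * (@nat_of_ord m.+2 ord0)%:Z) = Posz m.+1 by rewrite /=; lia.
have -> : (m.+2%:Z - 1 - 2 * (@nat_of_ord m.+2 (lift ord0 ord_max))%:Z) = - Posz m.+1.
  by rewrite /= /bump /=; lia.
rewrite -exprnN -addrA; congr (_ + _); rewrite addrC; congr (_ + _).
apply: eq_bigr => i _; congr (_ ^ _).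
rewrite /= /bump /=; lia.
Qed.

Lemma S1 (x : LQ) : \sum_(j < 1) x ^ (1%:Z - 1 - 2 * j%:Z) = 1.
Proof. by rewrite big_ord1 /= expr0z. Qed.

Lemma signinv (b : bool) k : ((((-1) : LQ) ^+ b) ^+ k)^-1 = ((-1) ^+ b) ^+ k.
Proof. by rewrite -exprVn; case: b; rewrite /= ?expr0 ?expr1 ?invr1 ?invrN1. Qed.

Lemma Glem (w : LQ) (b : bool) : w != 0 -> Z2 (w + w^-1) ->
  forall e : int, exists h, Z2 h /\
   w ^ e + (w ^ e)^-1 - 2 * ((-1) ^+ b) ^ e = (w + w^-1 - 2 * (-1) ^+ b) * h.
Proof.
move=> w0 Zw [n|n]; first by apply: Flem.
have [h [Zh E]] := Flem w b w0 Zw n.+1.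
exists h; split => //; rewrite /= invrK -E.
have NE : forall x : LQ, x ^ Negz n = (x ^+ n.+1)^-1 by [].
by rewrite !NE signinv; congr (_ - _); rewrite addrC.
Qed.

Lemma qv0 : qv != 0.
Proof. by rewrite /qv tofrac_eq0 polyX_eq0. Qed.

Lemma zv0 : zv != 0.
Proof.
apply/eqP => H.
have : qv * qv = 1.
  have : qv = qv^-1 by apply/eqP; rewrite -subr_eq0 -/zv H.
  by move=> {2}->; rewrite divff // qv0.
rewrite /qv -tofracM -tofrac1 => /eqP; rewrite tofrac_eq => /eqP E; have := congr1 (fun r : {poly int} => size r) E.
by rewrite -expr2 size_polyXn size_poly1.
Qed.

Lemma gid1 (F : fieldType) (q : F) : q != 0 ->
  q ^+ 2 + (q ^+ 2)^-1 = (q - q^-1) ^+ 2 + 2.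
Proof. by move=> q0; field. Qed.

Lemma qq1 (F : fieldType) (q : F) : q != 0 -> q - q^-1 != 0 -> q * q - 1 != 0.
Proof. by move=> q0 z0; rewrite -(mulfV q0) -mulrBr mulf_neq0. Qed.

Lemma gid2 (F : fieldType) (q Y : F) : q != 0 -> q - q^-1 != 0 -> Y != 0 ->
  Y ^+ 2 + (Y ^+ 2)^-1 - 2 = ((Y - Y^-1) / (q - q^-1)) ^+ 2 * (q - q^-1) ^+ 2.
Proof. move=> q0 z0 Y0; field; rewrite q0 Y0 qq1 //. Qed.

Lemma gid3 (F : fieldType) (q : F) : q != 0 -> q - q^-1 != 0 ->
  q ^+ 2 + (q ^+ 2)^-1 - 2 * (-1) = ((q ^+ 2 - (q ^+ 2)^-1) / (q - q^-1)) ^+ 2.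
Proof. move=> q0 z0; field; rewrite q0 qq1 //. Qed.

Lemma gid4 (R : comRingType) (A B S N : R) :
  A + B + S - (N + 2) = (A + B - 2) + (S - N).
Proof. ring. Qed.

Lemma Zq2 : Z2 (qv ^+ 2 + (qv ^+ 2)^-1).
Proof. by rewrite gid1 ?qv0 // -/zv; apply: Z2D; [apply: Z2z | apply: Z2n]. Qed.

Lemma Zpow (w : LQ) n : w != 0 -> Z2 (w + w^-1) -> Z2 (w ^+ n + (w ^+ n)^-1).
Proof.
move=> w0 Zw; have [h [Zh E]] := Flem w false w0 Zw n.
rewrite -(subrK (2 * ((-1) ^+ false) ^+ n) (w ^+ n + _)) E.
apply: Z2D; first apply: Z2M => //.
  by apply: Z2B => //; apply: Z2M; [apply: Z2n|apply: Z2X; apply: Z2N1].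
by apply: Z2M; [apply: Z2n|apply: Z2X; apply: Z2X; apply: Z2N1].
Qed.

Lemma oddsum (y : LQ) (tau : int) : y != 0 -> Z2 (y ^+ 2 + (y ^+ 2)^-1) ->
  forall r, exists h, Z2 h /\
   \sum_(j < (2 * r).+1) (y ^ tau) ^ (((2 * r).+1)%:Z - 1 - 2 * j%:Z)
     - ((2 * r).+1)%:R = (y ^+ 2 + (y ^+ 2)^-1 - 2) * h.
Proof.
move=> y0 Zy; elim=> [|r [h [Zh E]]].
  by exists 0; split; [have := Z2n 0| rewrite S1 subrr mulr0].
have -> : (2 * r.+1).+1 = ((2 * r).+1).+2 by lia.
have x0 : y ^ tau != 0 by apply: expfz_neq0.
rewrite Srec //.
have -> : (((2*r).+1).+2)%:R = ((2*r).+1)%:R + 2 :> LQ by rewrite -addn2 natrD.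
rewrite gid4 E.
have w0 : y ^+ 2 != 0 by exact: (expf_neq0 2 y0).
have [h' [Zh' E']] := Glem (y ^+ 2) false w0 Zy (tau * r.+1%:Z).
have Hex : (y ^ tau) ^+ (2 * r).+2 = (y ^+ 2) ^ (tau * r.+1%:Z).
  rewrite exprnP exprz_exp -[y ^+ 2]/(y ^ 2%:Z) exprz_exp; congr (_ ^ _); nia.
rewrite /= expr0 mulr1 in E'.
exists (h' + h); split; first by apply: Z2D.
by rewrite mulrDr -E' Hex exp1rz mulr1.
Qed.

Theorem lemma7p5 (p : nat) (tau : int) (hp : prime p) :
  exists P : {poly int},
    \sum_(j < p) (qv ^ (p%:Z * tau)) ^ (p%:Z - 1 - 2 * j%:Z)
      - p%:R * (-1 : LQ) ^ ((p%:Z - 1) * tau)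
    = qint p ^+ 2 * inZz2 P.
Proof.
have q0 := qv0; have z0 := zv0.
case: (even_prime hp) => [->|podd].
  have w0 : qv ^+ 2 != 0 by exact: (expf_neq0 2 q0).
  have [h [[P ->] E]] := Glem (qv ^+ 2) true w0 Zq2 tau.
  exists P.
  have -> : (2%:Z - 1) * tau = tau by rewrite mul1r.
  have x0 : qv ^ (2%:Z * tau) != 0 by exact: (expfz_neq0 _ q0).
  rewrite (Srec _ 0 x0) big_ord0 addr0 !expr1 -exprz_exp.
  rewrite expr1 in E; rewrite -[qv ^ 2%:Z]/(qv ^+ 2) E /qint.
  by rewrite (@gid3 _ qv q0 z0).
have [r Hp] : exists r, p = (2 * r).+1.
  by exists p./2; rewrite -{1}(odd_double_half p) podd add1n -mul2n.
subst p.
have y0 : qv ^+ (2 * r).+1 != 0 by exact: (expf_neq0 _ q0).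
have Zy : Z2 ((qv ^+ (2 * r).+1) ^+ 2 + ((qv ^+ (2 * r).+1) ^+ 2)^-1).
  rewrite -exprM (mulnC _ 2) exprM.
  exact: (Zpow (qv ^+ 2) (2 * r).+1 (expf_neq0 2 q0) Zq2).
have [h [[P ->] E]] := oddsum _ tau y0 Zy r.
exists ('X * P).
have -> : (-1 : LQ) ^ ((((2 * r).+1)%:Z - 1) * tau) = 1.
  have -> : ((2 * r).+1%:Z - 1) * tau = 2%:Z * (r%:Z * tau) by lia.
  by rewrite -exprz_exp -[(-1 : LQ) ^ 2%:Z]/((-1) ^+ 2) sqrrN expr1n exp1rz.
rewrite mulr1 -exprz_exp -[qv ^ ((2 * r).+1)%:Z]/(qv ^+ (2 * r).+1) E (@gid2 _ qv _ q0 z0 y0).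
rewrite /qint /inZz2 rmorphM /= hornerM map_polyX hornerX -/zv.
by rewrite -mulrA.
Qed.
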